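(* Consider a single base station and $N=2$ users. At each slot $t=1,2,\ldots$, one of the two users is chosen uniformly at random, independently across slots, to have a \textsf{Good} channel, and the other has a \textsf{Bad} channel. At each slot the base station schedules exactly one user via an online policy $\pi$: the decision at slot $t$ is measurable with respect to the sigma-algebra generated by the ages and scheduling decisions up to slot $t-1$ (so it does not know the current channel states). The ages evolve as $h_i(t+1)=1$ if $\mathrm{UE}_i$ was scheduled at slot $t$ and its channel was \textsf{Good} at slot $t$, and $h_i(t+1)=h_i(t)+1$ otherwise. Let $H_{\mathrm{sum}}(t)=\mathbb{E}^\pi[h_1(t)]+\mathbb{E}^\pi[h_2(t)]$. Then for every online policy $\pi$, $\limsup_{T\to\infty}\frac{1}{T}\sum_{t=1}^{T}H_{\mathrm{sum}}(t)\ge 6$.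
   Context: Each scheduled transmission thus succeeds with probability $p_1=p_2=1/2$. The quantity bounded is the time-averaged expected sum of the two users' ages. *)

(* Defs.v *)
From mathcomp Require Import all_boot all_order all_algebra.
From mathcomp Require Import all_classical all_reals all_analysis.
Set Implicit Arguments. Unset Strict Implicit. Unset Printing Implicit Defensive.
Import Order.TTheory GRing.Theory Num.Theory.
Local Open Scope ring_scope.

(* Channel state of a slot: a boolean c; c = true means UE_1 is Good (UE_2 Bad),
   c = false means UE_2 is Good (UE_1 Bad).
   Scheduling decision of a slot: a boolean d; d = true means UE_1 is scheduled,
   d = false means UE_2 is scheduled. *)

Definition age_update (h : nat * nat) (d c : bool) : nat * nat :=
  (if d && c then 1%N else (h.1).+1,
   if ~~ d && ~~ c then 1%N else (h.2).+1).

(* History available when deciding at slot t: the list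
   [(h(1), d(1)); ...; (h(t-1), d(t-1))] of ages and decisions up to slot t-1. *)
Definition history := seq ((nat * nat) * bool).

Definition policy := history -> bool.

Fixpoint run (pi : policy) (hist : history) (h : nat * nat) (cs : seq bool)
  : nat * nat :=
  match cs with
  | [::] => h
  | c :: cs' =>
      let d := pi hist in
      run pi (rcons hist (h, d)) (age_update h d c) cs'
  end.

(* Ages at slot (size cs).+1, starting from ages h0 at slot 1, with channel
   states cs at slots 1, ..., size cs. *)
Definition ages_at (pi : policy) (h0 : nat * nat) (cs : seq bool) : nat * nat :=
  run pi [::] h0 cs.

(* H_sum(t) = E[h_1(t)] + E[h_2(t)] for t >= 1: the channel states at slots
   1..t-1 are i.i.d. uniform, so each of the 2^(t-1) realizations has
   probability 2^-(t-1). *)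
Definition Hsum {R : realType} (pi : policy) (h0 : nat * nat) (t : nat) : R :=
  (2 ^- t.-1) *
  \sum_(cs : (t.-1).-tuple bool)
     (((ages_at pi h0 cs).1 + (ages_at pi h0 cs).2)%N)%:R.

Definition avg_Hsum {R : realType} (pi : policy) (h0 : nat * nat) (T : nat) : R :=
  T%:R^-1 * \sum_(1 <= t < T.+1) Hsum pi h0 t.

(* Main.v *)
Require Import Defs.
From mathcomp Require Import all_boot all_order all_algebra.
From mathcomp Require Import all_classical all_reals all_analysis.
From mathcomp Require Import zify ring lra.
Import Order.TTheory GRing.Theory Num.Theory.
Local Open Scope ring_scope.

Section Helpers.
Variable R : realType.
Variable pi : policy.

Fixpoint Ex (f : nat * nat -> R) (n : nat) (hist : history) (h : nat * nat) : R :=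
  match n with
  | 0%N => f h
  | n'.+1 => (Ex f n' (rcons hist (h, pi hist)) (age_update h (pi hist) true)
            + Ex f n' (rcons hist (h, pi hist)) (age_update h (pi hist) false)) / 2
  end.

Lemma sum_tuple_S n (G : (n.+1).-tuple bool -> R) :
  \sum_(cs : (n.+1).-tuple bool) G cs =
  \sum_(cs : n.-tuple bool) G [tuple of true :: cs]
  + \sum_(cs : n.-tuple bool) G [tuple of false :: cs].
Proof.
rewrite (reindex (fun p : bool * n.-tuple bool => [tuple of p.1 :: p.2])) /=.
  rewrite -(pair_big xpredT xpredT (fun b (t : n.-tuple bool) => G [tuple of b :: t])) /=.
  by rewrite big_bool.
exists (fun t : (n.+1).-tuple bool => (thead t, [tuple of behead t])).
  move=> [b t] _ /=; congr pair.
  by apply: val_inj.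
move=> t _ /=; by rewrite [in RHS](tuple_eta t).
Qed.

Lemma sum_Ex (F : nat * nat -> R) n : forall hist h,
  \sum_(cs : n.-tuple bool) F (run pi hist h cs) = 2 ^+ n * Ex F n hist h.
Proof.
elim: n => [|n IH] hist h.
  rewrite (eq_bigr (fun _ => F h)); last by move=> t _; rewrite (tuple0 t).
  by rewrite sumr_const card_tuple /= expr0 mul1r.
rewrite sum_tuple_S /= !IH exprS /=.
by field.
Qed.


Definition Fs (h : nat * nat) : R := ((h.1 + h.2)%N)%:R.
Definition Pp (h : nat * nat) : R := ((4 * minn h.1 h.2 + 2 * maxn h.1 h.2)%N)%:R.

Lemma drift_nat (h : nat * nat) d :
  (12 + 2 * (4 * minn h.1 h.2 + 2 * maxn h.1 h.2) <=
   2 * (h.1 + h.2)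
   + (4 * minn (age_update h d true).1 (age_update h d true).2
      + 2 * maxn (age_update h d true).1 (age_update h d true).2)
   + (4 * minn (age_update h d false).1 (age_update h d false).2
      + 2 * maxn (age_update h d false).1 (age_update h d false).2))%N.
Proof.
case: h => a b; case: d; rewrite /age_update /=; lia.
Qed.

Lemma drift n : forall hist h,
  6 + Ex Pp n hist h <= Ex Fs n hist h + Ex Pp n.+1 hist h.
Proof.
elim: n => [|n IH] hist h.
  rewrite /=.
  have := drift_nat h (pi hist).
  rewrite -(ler_nat R) /Fs /Pp !natrD.
  set x := (age_update h (pi hist) true); set y := (age_update h (pi hist) false).
  lra.
rewrite [Ex Pp n.+2 _ _]/=.
rewrite [Ex Pp n.+1 _ _]/= [Ex Fs n.+1 _ _]/=.
have := IH (rcons hist (h, pi hist)) (age_update h (pi hist) true).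
have := IH (rcons hist (h, pi hist)) (age_update h (pi hist) false).
rewrite [Ex Pp n.+1 _ _]/= [Ex Pp n.+1 _ _]/=.
lra.
Qed.

Lemma Ex_le3 n : forall hist h, Ex Pp n hist h <= 3 * Ex Fs n hist h.
Proof.
elim: n => [|n IH] hist h /=.
  rewrite /Pp /Fs; case: h => a b /=.
  have : (4 * minn a b + 2 * maxn a b <= 3 * (a + b))%N by lia.
  by rewrite -(ler_nat R) natrD; lra.
have := IH (rcons hist (h, pi hist)) (age_update h (pi hist) true).
have := IH (rcons hist (h, pi hist)) (age_update h (pi hist) false).
lra.
Qed.

Lemma Ex_ge0 (f : nat * nat -> R) (hf : forall h, 0 <= f h) n :
  forall hist h, 0 <= Ex f n hist h.
Proof.
elim: n => [|n IH] hist h /=; first exact: hf.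
have := IH (rcons hist (h, pi hist)) (age_update h (pi hist) true).
have := IH (rcons hist (h, pi hist)) (age_update h (pi hist) false).
lra.
Qed.

End Helpers.



Section Main.
Variable R : realType.
Variable pi : policy.
Variable h0 : nat * nat.

Let u t : R := Hsum (R := R) pi h0 t.
Let S T : R := \sum_(1 <= t < T.+1) u t.

Lemma u_ge0 t : 0 <= u t.
Proof.
rewrite /u /Hsum; apply: mulr_ge0; first by rewrite invr_ge0 exprn_ge0.
by apply: sumr_ge0 => i _; apply: ler0n.
Qed.

Lemma u_Ex t : u t.+1 = Ex R pi (Fs R) t [::] h0.
Proof.
rewrite /u /Hsum /= /ages_at (sum_Ex R pi (Fs R)) mulrA mulVf ?mul1r //.
Qed.

Lemma telescope T : 6 * T%:R + Ex R pi (Pp R) 0 [::] h0 <= S T + Ex R pi (Pp R) T [::] h0.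
Proof.
elim: T => [|T IH]; first by rewrite /S big_geq // mulr0 add0r.
have -> : S T.+1 = S T + u T.+1 by rewrite /S big_nat_recr.
rewrite u_Ex.
have := drift R pi T [::] h0.
have -> : (T.+1%:R : R) = T%:R + 1 by rewrite -addn1 natrD.
lra.
Qed.

Lemma key T : 6 * T%:R - 3 * u T.+1 <= S T.
Proof.
have := telescope T; have := Ex_le3 R pi T [::] h0.
have : 0 <= Ex R pi (Pp R) 0 [::] h0 by apply: Ex_ge0 => h; apply: ler0n.
rewrite u_Ex; lra.
Qed.

Lemma main n c : c < 6 -> exists k, (n <= k)%N /\ c < avg_Hsum (R := R) pi h0 k.
Proof.
move=> c6.
have [//|Hn] := pselect (exists k, (n <= k)%N /\ c < avg_Hsum (R := R) pi h0 k).
exfalso.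
have Hall k : (n.+1 <= k)%N -> S k <= c * k%:R.
  move=> hk; have hk' : (n <= k)%N by apply: ltnW.
  have : avg_Hsum (R := R) pi h0 k <= c.
    rewrite leNgt; apply/negP => hlt; apply: Hn; exists k; split => //.
  have k0 : (k%:R : R) != 0 by rewrite pnatr_eq0 -lt0n (leq_trans _ hk).
  have -> : S k = k%:R * avg_Hsum (R := R) pi h0 k.
    by rewrite /avg_Hsum mulrA mulfV // mul1r.
  rewrite mulrC => hle; apply: ler_wpM2r => //.
have Hu T : (n.+1 <= T)%N -> (6 - c) * T%:R / 3 <= u T.+1.
  move=> hT; have := key T; have := Hall T hT; lra.
pose x := 6 * c / (6 - c).
pose N := (n.+1 + Num.truncn x).+1.
have Nx : x < N%:R.
  apply: lt_le_trans (truncnS_gt x) _; rewrite ler_nat /N. by rewrite ltnS leq_addl.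
have N0 : (0 : R) < N%:R by rewrite ltr0n.
have hS : S (N + N) = S N + \sum_(N.+1 <= t < (N + N).+1) u t.
  by rewrite /S (big_cat_nat (n := N.+1)) //; lia.
have hS1 : 0 <= S N by apply: sumr_ge0 => t _; apply: u_ge0.
have hS2 : \sum_(N.+1 <= t < (N + N).+1) ((6 - c) * N%:R / 3) <= \sum_(N.+1 <= t < (N + N).+1) u t.
  rewrite big_nat_cond [X in _ <= X]big_nat_cond; apply: ler_sum => t.
  rewrite andbT => /andP [ht1 ht2].
  have -> : t = t.-1.+1 by rewrite prednK // (leq_trans _ ht1).
  apply: le_trans (Hu t.-1 _); last by rewrite /N in ht1 *; lia.
  have hc : 0 <= 6 - c by lra.
  rewrite ler_pM2r // ler_wpM2l // ler_nat; lia.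
have hS3 := Hall (N + N)%N ltac:(rewrite /N; lia).
rewrite sumr_const_nat subSS addnK -mulr_natr in hS2.
have : (6 - c) * N%:R / 3 * N%:R <= 2 * c * N%:R.
  rewrite natrD in hS3; lra.
rewrite ler_pM2r // => h1.
have : x * (6 - c) < N%:R * (6 - c) by rewrite ltr_pM2r //; lra.
rewrite /x divfK; last by apply/eqP; lra.
lra.
Qed.

End Main.

Local Open Scope ereal_scope.

Theorem proposition1 (R : realType) (pi : policy) (h0 : nat * nat) :
  (6%:R : R)%:E <= limn_esup (fun T : nat => (avg_Hsum (R := R) pi h0 T)%:E).
Proof.
rewrite limn_esup_lim; apply: lime_ge; first exact: is_cvg_esups.
apply: nearW => m; rewrite /esups /=.
set s := ereal_sup _.
have H c : (c < 6)%R -> c%:E <= s.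
  move=> c6; have [k [hk hc]] := main R pi h0 m c c6.
  apply: (@le_trans _ _ (avg_Hsum (R := R) pi h0 k)%:E).
    by rewrite lee_fin ltW.
  by apply: ereal_sup_ubound; exists k.
move: H; case: s => [r| |] H.
- rewrite lee_fin leNgt; apply/negP => hr.
  have := H ((r + 6) / 2)%R ltac:(lra); rewrite lee_fin; lra.
- exact: leey.
- by have := H 0%R ltac:(lra).
Qed.
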